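(* Let $f:[0,\infty)\to(0,\infty)$ be twice continuously differentiable with $(f'(x))^2\le f''(x)f(x)$ for all $x\ge0$, and assume the power series $g(x)=\sum_{n=0}^\infty f(n)x^n$ has positive radius of convergence. Then the reciprocal power series has the form $\frac{1}{g(x)}=\frac{1}{f(0)}\Bigl(1-\sum_{n=1}^\infty b_nx^n\Bigr)$ with $b_n\ge0$ for all $n\ge1$; consequently the kernel $K(z,w)=\sum_{n=0}^\infty f(n)z^n\overline w^n$ is a complete Nevanlinna–Pick kernel.
   Context: A positive definite kernel of the form $K(z,w)=\sum_n a_n(z\overline w)^n$ with $a_0>0$ is a complete Nevanlinna–Pick (CNP) kernel when $1/K(z,w)=\frac{1}{a_0}(1-\sum_{n\ge1}b_n(z\overline w)^n)$ with all $b_n\ge0$ (i.e. $1/K$ has one positive square). *)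

(* Defs.v *)
From Stdlib Require Import Reals.
From Coquelicot Require Import Coquelicot.
Open Scope R_scope.

(* f : [0,oo) -> R is twice continuously differentiable, with first and second
   derivatives f1, f2.  At the endpoint 0 the derivatives are one-sided (right)
   derivatives and continuity of f2 is continuity within [0,oo). *)
Definition C2_on_nonneg (f f1 f2 : R -> R) : Prop :=
  (forall x, 0 < x -> is_derive f x (f1 x) /\ is_derive f1 x (f2 x)) /\
  filterlim (fun h => (f h - f 0) / h) (at_right 0) (locally (f1 0)) /\
  filterlim (fun h => (f1 h - f1 0) / h) (at_right 0) (locally (f2 0)) /\
  (forall x, 0 < x -> continuous f2 x) /\
  filterlim f2 (at_right 0) (locally (f2 0)).

(* c is the (formal) reciprocal power series of the power series with
   coefficients a:  (sum a_n x^n) * (sum c_n x^n) = 1  coefficientwise. *)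
Definition is_reciprocal_series (a c : nat -> R) : Prop :=
  forall n : nat,
    sum_f_R0 (fun k => a k * c (n - k)%nat) n = if Nat.eqb n 0 then 1 else 0.

Definition one_minus_series (a0 : R) (b : nat -> R) : nat -> R :=
  fun n => if Nat.eqb n 0 then / a0 else - b n / a0.

(* K(z,w) = sum a_n (z wbar)^n with a_0 > 0 is a complete Nevanlinna-Pick
   kernel: 1/K = (1/a_0)(1 - sum_{n>=1} b_n (z wbar)^n) with all b_n >= 0. *)
Definition CNP_kernel (a : nat -> R) : Prop :=
  0 < a 0%nat /\
  exists b : nat -> R,
    (forall n, (1 <= n)%nat -> 0 <= b n) /\
    is_reciprocal_series a (one_minus_series (a 0%nat) b).

(* Main.v *)
From Stdlib Require Import Reals Lra Lia Psatz.
From Coquelicot Require Import Coquelicot.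
Require Import Defs.
Open Scope R_scope.

Section Alg.
Variable a : nat -> R.
Hypothesis apos : forall n, 0 < a n.
Hypothesis alc : forall n, a (S n) ^ 2 <= a n * a (S (S n)).

Lemma ratio_mono : forall m n, (m <= n)%nat -> a (S m) * a n <= a (S n) * a m.
Proof.
  intros m n Hmn. induction Hmn as [|n Hmn IH].
  - lra.
  - pose proof (alc n) as L. pose proof (apos n) as P1. pose proof (apos (S n)) as P2.
    pose proof (apos m) as P3. pose proof (apos (S m)) as P4. pose proof (apos (S (S n))) as P5.
    assert (HH : a n * a (S n) * (a (S m) * a (S n)) <= a n * a (S n) * (a (S (S n)) * a m)).
    { assert (a (S m) * a n * (a (S n) * a (S n)) <= a (S n) * a m * (a n * a (S (S n)))).
      { simpl in L; apply Rmult_le_compat; nra. }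
      nra. }
    apply Rmult_le_reg_l with (a n * a (S n)). nra. exact HH.
Qed.

Fixpoint bs (n : nat) : nat -> R :=
  match n with
  | O => fun _ => 0
  | S n' => fun k => if Nat.leb k n' then bs n' k
            else (a (S n') - sum_f_R0 (fun j => bs n' j * a (S n' - j)%nat) n') / a 0%nat
  end.

Definition bb (k : nat) : R := bs k k.

Lemma bs_stable : forall n k, (k <= n)%nat -> bs n k = bb k.
Proof.
  induction n; intros k Hk.
  - assert (k = 0%nat) by lia. subst. reflexivity.
  - destruct (Nat.eq_dec k (S n)) as [->|Hne]. reflexivity.
    simpl. assert (Nat.leb k n = true) as -> by (apply Nat.leb_le; lia).
    apply IHn. lia.
Qed.

Lemma bb0 : bb 0 = 0.
Proof. reflexivity. Qed.

Lemma bbS : forall n, bb (S n) =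
  (a (S n) - sum_f_R0 (fun j => bb j * a (S n - j)%nat) n) / a 0%nat.
Proof.
  intros n. unfold bb at 1. change (bs (S n) (S n)) with (if Nat.leb (S n) n then bs n (S n) else (a (S n) - sum_f_R0 (fun j => bs n j * a (S n - j)%nat) n) / a 0%nat).
  assert (Nat.leb (S n) n = false) as -> by (apply Nat.leb_gt; lia).
  f_equal. f_equal. apply sum_eq. intros i Hi. rewrite bs_stable by lia. reflexivity.
Qed.

Lemma bb_rel : forall n, sum_f_R0 (fun j => bb j * a (S n - j)%nat) (S n) = a (S n).
Proof.
  intros n. rewrite tech5. rewrite bbS. rewrite Nat.sub_diag.
  pose proof (apos 0). field. lra.
Qed.

Lemma bb_nonneg : forall n k, (k <= n)%nat -> 0 <= bb k.
Proof.
  induction n; intros k Hk.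
  - assert (k = 0%nat) by lia. subst. rewrite bb0. lra.
  - destruct (Nat.eq_dec k (S n)) as [->|Hne]; [|apply IHn; lia].
    rewrite bbS. pose proof (apos 0) as A0.
    apply Rmult_le_pos; [|left; apply Rinv_0_lt_compat; exact A0].
    apply Rge_le, Rge_minus, Rle_ge.
    destruct n as [|n'].
    + simpl. rewrite bb0. pose proof (apos 1). nra.
    + pose proof (bb_rel n') as Hr.
      pose proof (apos (S n')) as An. pose proof (apos (S (S n'))) as An1.
      apply Rmult_le_reg_l with (a (S n')). exact An.
      replace (a (S n') * a (S (S n'))) with (a (S (S n')) * sum_f_R0 (fun j => bb j * a (S n' - j)%nat) (S n')) by (rewrite Hr; ring).
      rewrite scal_sum. rewrite scal_sum.
      apply sum_Rle. intros j Hj.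
      pose proof (IHn j Hj) as Bj.
      pose proof (ratio_mono (S n' - j) (S n') ltac:(lia)) as Rm.
      replace (S (S n' - j)) with (S (S n') - j)%nat in Rm by lia.
      nra.
Qed.


Lemma rev_sum : forall n, sum_f_R0 (fun k => a k * bb (n - k)%nat) n = sum_f_R0 (fun j => bb j * a (n - j)%nat) n.
Proof.
  intros n. rewrite <- (sum_f_R0_skip (fun j => bb j * a (n - j)%nat) n).
  apply sum_eq. intros i Hi. replace (n - (n - i))%nat with i by lia. ring.
Qed.

Lemma recip : is_reciprocal_series a (one_minus_series (a 0%nat) bb).
Proof.
  pose proof (apos 0) as A0.
  intros n. destruct n as [|m].
  - simpl. unfold one_minus_series. simpl. field. lra.
  - simpl (Nat.eqb (S m) 0). rewrite tech5. rewrite Nat.sub_diag.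
    unfold one_minus_series at 2. simpl (Nat.eqb 0 0).
    rewrite (sum_eq _ (fun k => (a k * bb (S m - k)%nat) * (- / a 0%nat))).
    2:{ intros i Hi. unfold one_minus_series.
        assert (Nat.eqb (S m - i) 0 = false) as -> by (apply Nat.eqb_neq; lia).
        field. lra. }
    rewrite <- scal_sum.
    assert (E : sum_f_R0 (fun k => a k * bb (S m - k)%nat) m = a (S m)).
    { pose proof (bb_rel m) as Hr. rewrite <- rev_sum in Hr. rewrite tech5 in Hr.
      rewrite Nat.sub_diag, bb0 in Hr. lra. }
    rewrite E. field. lra.
Qed.
End Alg.

Section An.
Variables f f1 f2 : R -> R.
Hypothesis Hd : forall x, 0 < x -> is_derive f x (f1 x) /\ is_derive f1 x (f2 x).
Hypothesis fpos : forall x, 0 <= x -> 0 < f x.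
Hypothesis Hin : forall x, 0 <= x -> (f1 x) ^ 2 <= f2 x * f x.

Lemma cont_of_der (g dg : R -> R) x : is_derive g x (dg x) -> continuity_pt g x.
Proof.
  intros D. apply derivable_continuous_pt. exists (dg x). apply is_derive_Reals. exact D.
Qed.

Lemma mvt (g dg : R -> R) p q : p < q ->
  (forall x, p <= x <= q -> is_derive g x (dg x)) ->
  exists c, p <= c <= q /\ g q - g p = dg c * (q - p).
Proof.
  intros Hpq D.
  destruct (MVT_gen g p q dg) as [c [Hc E]].
  - intros x Hx. rewrite Rmin_left in Hx by lra. rewrite Rmax_right in Hx by lra. apply D; lra.
  - intros x Hx. rewrite Rmin_left in Hx by lra. rewrite Rmax_right in Hx by lra.
    apply cont_of_der with dg. apply D; lra.
  - rewrite Rmin_left in Hc by lra. rewrite Rmax_right in Hc by lra. exists c; auto.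
Qed.

Lemma h_der x : 0 < x -> is_derive (fun t => f1 t / f t) x ((f2 x * f x - f1 x * f1 x) / f x ^ 2).
Proof.
  intros Hx. destruct (Hd x Hx) as [D1 D2].
  pose proof (fpos x ltac:(lra)).
  replace (f2 x * f x - f1 x * f1 x) with (f2 x * f x - f1 x * f1 x) by ring.
  apply is_derive_div; auto. lra.
Qed.

Lemma h_mono p q : 0 < p -> p <= q -> f1 p / f p <= f1 q / f q.
Proof.
  intros Hp Hpq. destruct (Req_dec p q) as [->|Hne]. lra.
  destruct (mvt (fun t => f1 t / f t) (fun x => (f2 x * f x - f1 x * f1 x) / f x ^ 2) p q) as [c [Hc E]].
  lra. intros x Hx. apply h_der. lra.
  assert (0 <= (f2 c * f c - f1 c * f1 c) / f c ^ 2).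
  { pose proof (Hin c ltac:(lra)). pose proof (fpos c ltac:(lra)).
    apply Rmult_le_pos. simpl in *. nra. left. apply Rinv_0_lt_compat. nra. }
  cbv beta in E. nra.
Qed.

Lemma g_der x : 0 < x -> is_derive (fun t => ln (f t)) x (f1 x / f x).
Proof.
  intros Hx. destruct (Hd x Hx) as [D1 _]. pose proof (fpos x ltac:(lra)).
  apply is_derive_Reals. apply is_derive_Reals in D1.
  replace (f1 x / f x) with (/ f x * f1 x) by (unfold Rdiv; ring).
  change (derivable_pt_lim (comp ln f) x (/ f x * f1 x)).
  apply (derivable_pt_lim_comp f ln x (f1 x) (/ f x)); auto.
  apply derivable_pt_lim_ln. auto.
Qed.

Lemma sym_ineq x t : 0 < t < x -> f x ^ 2 <= f (x - t) * f (x + t).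
Proof.
  intros Ht.
  destruct (mvt (fun t => ln (f t)) (fun x => f1 x / f x) (x - t) x) as [c1 [Hc1 E1]].
  lra. intros y Hy. apply g_der. lra.
  destruct (mvt (fun t => ln (f t)) (fun x => f1 x / f x) x (x + t)) as [c2 [Hc2 E2]].
  lra. intros y Hy. apply g_der. lra.
  cbv beta in E1, E2.
  pose proof (h_mono c1 c2 ltac:(lra) ltac:(lra)) as M.
  assert (L : ln (f x * f x) <= ln (f (x - t) * f (x + t))).
  { pose proof (fpos x ltac:(lra)). pose proof (fpos (x-t) ltac:(lra)). pose proof (fpos (x+t) ltac:(lra)).
    rewrite !ln_mult by lra. nra. }
  pose proof (fpos x ltac:(lra)). pose proof (fpos (x-t) ltac:(lra)). pose proof (fpos (x+t) ltac:(lra)).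
  simpl. rewrite Rmult_1_r.
  destruct (Rle_or_lt (f x * f x) (f (x - t) * f (x + t))) as [Hle|Hlt]; auto.
  exfalso. apply ln_increasing in Hlt; [lra|nra].
Qed.

Hypothesis Hr0 : filterlim (fun h => (f h - f 0) / h) (at_right 0) (locally (f1 0)).

Lemma rc0 : filterlim f (at_right 0) (locally (f 0)).
Proof.
  assert (L : filterlim (fun h => plus (f 0) (mult h ((f h - f 0) / h))) (at_right 0)
                (locally (plus (f 0) (mult 0 (f1 0))))).
  { eapply filterlim_comp_2; [apply filterlim_const| |apply (@filterlim_plus R_AbsRing R_NormedModule)].
    eapply filterlim_comp_2; [| exact Hr0 | apply (@filterlim_mult R_AbsRing)].
    eapply filterlim_filter_le_1; [apply filter_le_within | apply filterlim_id]. }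
  change (plus (f 0) (mult 0 (f1 0))) with (f 0 + 0 * f1 0) in L. replace (f 0 + 0 * f1 0) with (f 0) in L by ring.
  eapply filterlim_ext_loc; [| exact L].
  exists (mkposreal 1 Rlt_0_1). intros y _ Hy. change (f 0 + y * ((f y - f 0) / y) = f y).
  field. lra.
Qed.

Lemma endpoint : f 1 ^ 2 <= f 0 * f 2.
Proof.
  assert (C2 : filterlim (fun s => f (2 - s)) (at_right 0) (locally (f 2))).
  { eapply filterlim_comp with (G := locally 2).
    - assert (K : filterlim (fun s => 2 - s) (locally 0) (locally (2 - 0))).
      { apply continuity_pt_filterlim. apply continuity_pt_minus.
        apply continuity_pt_const. intros u v; reflexivity. apply continuity_pt_id. }
      replace (2 - 0) with 2 in K by ring.
      eapply filterlim_filter_le_1; [apply filter_le_within | exact K].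
    - apply continuity_pt_filterlim. apply cont_of_der with f1. apply Hd. lra. }
  assert (P : filterlim (fun s => f s * f (2 - s)) (at_right 0) (locally (mult (f 0) (f 2)))).
  { eapply filterlim_comp_2; [exact rc0 | exact C2 | apply (@filterlim_mult R_AbsRing)]. }
  change (mult (f 0) (f 2)) with (f 0 * f 2) in P.
  destruct (Rle_or_lt (f 1 ^ 2) (f 0 * f 2)) as [Hle|Hlt]; auto. exfalso.
  assert (eps : 0 < f 1 ^ 2 - f 0 * f 2) by lra.
  pose proof (proj1 (filterlim_locally _ _) P (mkposreal _ eps)) as Ev.
  assert (Ev2 : at_right 0 (fun s => s < 1)).
  { exists (mkposreal 1 Rlt_0_1). intros y Hy _. apply Rabs_lt_between' in Hy.
    simpl in Hy. lra. }
  assert (Ev3 : at_right 0 (fun s => 0 < s)).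
  { exists (mkposreal 1 Rlt_0_1). intros y _ Hy. exact Hy. }
  destruct (filter_ex _ (filter_and _ _ Ev (filter_and _ _ Ev2 Ev3))) as [s [Hb [Hs1 Hs0]]].
  change (Rabs (f s * f (2 - s) - f 0 * f 2) < f 1 ^ 2 - f 0 * f 2) in Hb.
  apply Rabs_lt_between' in Hb.
  pose proof (sym_ineq 1 (1 - s) ltac:(lra)) as S.
  replace (1 - (1 - s)) with s in S by ring. replace (1 + (1 - s)) with (2 - s) in S by ring.
  lra.
Qed.
End An.

Theorem theorem9p6 (f f1 f2 : R -> R) :
  C2_on_nonneg f f1 f2 ->
  (forall x, 0 <= x -> 0 < f x) ->
  (forall x, 0 <= x -> (f1 x) ^ 2 <= f2 x * f x) ->
  Rbar_lt (Finite 0) (CV_radius (fun n : nat => f (INR n))) ->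
  (exists b : nat -> R,
      (forall n, (1 <= n)%nat -> 0 <= b n) /\
      is_reciprocal_series (fun n : nat => f (INR n)) (one_minus_series (f 0) b)) /\
  CNP_kernel (fun n : nat => f (INR n)).
Proof.
  intros [Hd [Hr0 _]] fpos Hin _.
  set (a := fun n : nat => f (INR n)).
  assert (apos : forall n, 0 < a n) by (intros n; apply fpos, pos_INR).
  assert (alc : forall n, a (S n) ^ 2 <= a n * a (S (S n))).
  { intros n. unfold a. destruct n as [|n].
    - simpl. replace (1 + 1) with 2 by ring. apply (endpoint f f1 f2 Hd fpos Hin Hr0).
    - pose proof (pos_INR n).
      rewrite (S_INR (S (S n))), (S_INR (S n)).
      pose proof (sym_ineq f f1 f2 Hd fpos Hin (INR (S n) + 1) 1) as Sy.
      replace (INR (S n) + 1 - 1) with (INR (S n)) in Sy by ring.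
      apply Sy. rewrite S_INR. lra. }
  assert (A0 : a 0%nat = f 0) by reflexivity.
  split.
  - exists (bb a). split.
    + intros n _. apply (bb_nonneg a apos alc n n). lia.
    + rewrite <- A0. apply recip; auto.
  - split. apply apos. exists (bb a). split.
    + intros n _. apply (bb_nonneg a apos alc n n). lia.
    + apply recip; auto.
Qed.
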